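(* Let $\mu$ be a measure on $\mathbb R$ with infinite support and finite moments $m_k(\mu)=\int t^k\,d\mu(t)$, $k\ge0$. Let $a_n\in\mathbb R_{>0}$ and $b_n\in\mathbb R$ ($n\ge1$) be such that the $n$-th approximant $w_n(z)$ of the continued fraction $\cfrac{a_1}{z+b_1-\cfrac{a_2}{z+b_2-\cfrac{a_3}{z+b_3-\cdots}}}$ satisfies $w_n(z)-\sum_{k=0}^{2n-1}\frac{m_k(\mu)}{z^{k+1}}=o(z^{-2n})$ $(z\to\infty)$ for every $n\ge1$. Let $f(z)$ be a complex-valued function defined on an unbounded subset $\mathfrak X$ of $\mathbb C\cup\{\infty\}$. Then the following are equivalent: (i) $f(z)\sim\sum_{k=0}^\infty\frac{m_k(\mu)}{z^{k+1}}$ $(z\to\infty)_{\mathfrak X}$; (ii) $f(z)\sim\cfrac{a_1}{z+b_1-\cfrac{a_2}{z+b_2-\cfrac{a_3}{z+b_3-\cdots}}}$ $(z\to\infty)_{\mathfrak X}$; (iii) for every $n\ge1$, $f(z)=\cfrac{a_1}{z+b_1-\cfrac{a_2}{\ddots-\cfrac{a_n}{z+b_n-f_n(z)}}}$ for some $f_n$ with $f_n(z)\sim\frac{a_{n+1}}{z}$ $(z\to\infty)_{\mathfrak X}$; (iv) $f(z)-w_n(z)\sim\frac{a_1\cdots a_{n+1}}{z^{2n+1}}$ $(z\to\infty)_{\mathfrak X}$ for all $n\ge0$; (v) $f(z)-w_n(z)=O(z^{-(2n+1)})$ $(z\to\infty)_{\mathfrak X}$ for all $n\ge0$; (vi) $f(z)-w_n(z)=O(z^{-(2n+1)})$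 $(z\to\infty)_{\mathfrak X}$ for infinitely many $n\ge0$; (vii) for every $n\ge0$, $w_n$ is the unique rational function of degree at most $n$ with $f(z)-w(z)=O(z^{-(2n+1)})$ $(z\to\infty)_{\mathfrak X}$; (viii) for every $n\ge1$, $w_n$ is the unique Padé approximant of $f$ over $\mathfrak X$ at $\infty$ of order $[n-1,n]$. In particular, for all $\delta,\varepsilon>0$ the Stieltjes transform $\mathcal S_\mu(z)=\int\frac{d\mu(t)}{z-t}$ satisfies $\mathcal S_\mu(z)\sim\cfrac{a_1}{z+b_1-\cfrac{a_2}{z+b_2-\cdots}}$ $(z\to\infty)_{\mathbb C_{\delta,\varepsilon}}$ over $\mathbb C_{\delta,\varepsilon}=\{z\in\mathbb C:\delta\le|\operatorname{Arg}(z)|\le\pi-\varepsilon\}$.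
   Context: Known fact (Stieltjes/Jacobi theory): for such $\mu$ sequences $a_n>0$, $b_n\in\mathbb R$ as described exist. Asymptotic relations as $z\to\infty$ within $\mathfrak X$: $O$, $o$, $\sim$ on punctured neighbourhoods of $\infty$ intersected with $\mathfrak X$. $f\sim\sum_k c_k/z^{k+1}$ means $f-\sum_{k=0}^n c_k/z^{k+1}=o(z^{-(n+1)})$ for all $n$. For a continued fraction with approximants $v_m$ ($v_0=0$), $f\sim K$ means $\{v_m-v_{m-1}\}_{m\ge1}$ is an asymptotic sequence and $f-v_m=O(v_{m+1}-v_m)$ for all $m\ge0$. Degree of a rational function: max of degrees of numerator and denominator in lowest terms. Padé approximant of order $[n-1,n]$ at $\infty$: the unique $g/h$, $\deg g\le n-1$, $0\ne h$, $\deg h\le n$, with $f-g/h=O(z^{-(2n+1)})$ $(z\to\infty)_{\mathfrak X}$. *)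

(* Defs.v *)
From HB Require Import structures.
From mathcomp Require Import all_boot all_order all_algebra.
From mathcomp Require Import all_classical all_reals all_analysis.
From mathcomp Require Import complex.
Set Implicit Arguments. Unset Strict Implicit. Unset Printing Implicit Defensive.
Import Order.TTheory GRing.Theory Num.Theory.
Local Open Scope classical_set_scope.
Local Open Scope ring_scope.
Local Open Scope complex_scope.

Section Defs.
Variable R : realType.
Local Notation C := R[i].

Definition unbounded (X : set C) : Prop :=
  forall r : R, exists2 z, X z & r%:C < `|z|.

Definition bigO_at_oo (X : set C) (f g : C -> C) : Prop :=
  exists M : R, exists r : R,
    forall z, X z -> r%:C < `|z| -> `|f z| <= M%:C * `|g z|.

Definition littleo_at_oo (X : set C) (f g : C -> C) : Prop :=
  forall eps : R, 0 < eps -> exists r : R,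
    forall z, X z -> r%:C < `|z| -> `|f z| <= eps%:C * `|g z|.

Definition asym_equiv (X : set C) (f g : C -> C) : Prop :=
  littleo_at_oo X (fun z => f z - g z) g.

Definition asym_expansion (X : set C) (f : C -> C) (c : nat -> C) : Prop :=
  forall n : nat,
    littleo_at_oo X (fun z => f z - \sum_(0 <= k < n.+1) c k / z ^+ k.+1)
                    (fun z => (z ^+ n.+1)^-1).

Definition asym_sequence (X : set C) (phi : nat -> C -> C) : Prop :=
  forall m : nat, (0 < m)%N -> littleo_at_oo X (phi m.+1) (phi m).

(* f ~ K (z -> oo)_X for a continued fraction K with approximants v_m, v_0 = 0 *)
Definition cf_asymp (X : set C) (f : C -> C) (v : nat -> C -> C) : Prop :=
  asym_sequence X (fun m z => v m z - v m.-1 z) /\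
  forall m : nat, bigO_at_oo X (fun z => f z - v m z)
                               (fun z => v m.+1 z - v m z).

(* cf_nest a b n z u = a_1/(z+b_1 - a_2/(z+b_2 - ... a_n/(z+b_n - u))) *)
Fixpoint cf_nest (a b : nat -> R) (n : nat) (z u : C) : C :=
  match n with
  | 0 => u
  | n'.+1 => cf_nest a b n' z ((a n)%:C / (z + (b n)%:C - u))
  end.

Definition cf_approx (a b : nat -> R) (n : nat) (z : C) : C := cf_nest a b n z 0.

Definition is_ratfun_of (r : C -> C) (g h : {poly C}) : Prop :=
  h != 0 /\ exists rr : R, forall z, rr%:C < `|z| -> r z = g.[z] / h.[z].

Definition ratfun_deg_le (n : nat) (r : C -> C) : Prop :=
  exists g h : {poly C}, is_ratfun_of r g h /\ coprimep g h /\
    (size g <= n.+1)%N /\ (size h <= n.+1)%N.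

Definition eq_near_oo (r s : C -> C) : Prop :=
  exists rr : R, forall z, rr%:C < `|z| -> r z = s z.

Definition pade_approx (X : set C) (f : C -> C) (n : nat) (r : C -> C) : Prop :=
  (exists g h : {poly C}, is_ratfun_of r g h /\
     (size g <= n)%N /\ (size h <= n.+1)%N) /\
  bigO_at_oo X (fun z => f z - r z) (fun z => (z ^+ (2 * n).+1)^-1).

Definition msupport (mu : {measure set R -> \bar R}) : set R :=
  [set t | forall e : R, 0 < e ->
     let I : set R := [set s | t - e < s < t + e] in (0 < mu I)%E].

Definition moment (mu : {measure set R -> \bar R}) (k : nat) : R :=
  fine (\int[mu]_t (t ^+ k)%:E)%E.

Definition stieltjes (mu : {measure set R -> \bar R}) (z : C) : C :=
  Complex (fine (\int[mu]_t (complex.Re ((z - t%:C)^-1))%:E)%E)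
          (fine (\int[mu]_t (complex.Im ((z - t%:C)^-1))%:E)%E).

Definition sector (delta eps : R) : set C :=
  [set z | z != 0 /\ exists theta : R,
     [/\ - pi < theta <= pi, z = `|z| * (cos theta +i* sin theta)%C
       & delta <= `|theta| <= pi - eps]].

End Defs.

(* Main.v *)
Require Import Defs.
From HB Require Import structures.
From mathcomp Require Import all_boot all_order all_algebra.
From mathcomp Require Import all_classical all_reals all_analysis.
From mathcomp Require Import complex.
From mathcomp Require Import ring lra zify.
Import Order.TTheory GRing.Theory Num.Theory.
Local Open Scope classical_set_scope.
Local Open Scope ring_scope.
Local Open Scope complex_scope.
Set Implicit Arguments. Unset Strict Implicit. Unset Printing Implicit Defensive.


Ltac side := repeat (match goal with |- is_true (_ && _) => apply/andP; split end);
  try done; try (by apply: mulf_neq0).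

Section Asym.
Variable R : realType.
Local Notation C := R[i].

Definition nr (z : C) : R := complex.Re `|z|.

Lemma nrE (z : C) : `|z| = (nr z)%:C.
Proof. by rewrite /nr RRe_real // normr_real. Qed.

Lemma nr0 : nr (0 : C) = 0.
Proof. by rewrite /nr normr0. Qed.

Lemma nr_ge0 (z : C) : 0 <= nr z.
Proof. by rewrite -ler0c -nrE. Qed.

Lemma nrM (x y : C) : nr (x * y) = nr x * nr y.
Proof. by apply: complexI; rewrite rmorphM -!nrE normrM. Qed.

Lemma nrD (x y : C) : nr (x + y) <= nr x + nr y.
Proof. by rewrite -lecR rmorphD -!nrE ler_normD. Qed.

Lemma nrN (x : C) : nr (- x) = nr x.
Proof. by rewrite /nr normrN. Qed.

Lemma nrB (x y : C) : nr (x - y) = nr (y - x).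
Proof. by rewrite /nr distrC. Qed.

Lemma nr_eq0 (x : C) : (nr x == 0) = (x == 0).
Proof. by rewrite -(inj_eq (@complexI R)) -nrE rmorph0 normr_eq0. Qed.

Lemma nrV (x : C) : nr x^-1 = (nr x)^-1.
Proof. by apply: complexI; rewrite fmorphV -!nrE normfV. Qed.

Lemma nrX (x : C) k : nr (x ^+ k) = nr x ^+ k.
Proof. by apply: complexI; rewrite rmorphXn -!nrE normrX. Qed.

Lemma nrC (r : R) : nr r%:C = `|r|.
Proof. by rewrite /nr normc_def /= expr0n /= addr0 sqrtr_sqr. Qed.

Lemma nr_gt0 (x : C) : x != 0 -> 0 < nr x.
Proof. by move=> hx; rewrite lt_def nr_eq0 hx nr_ge0. Qed.

Lemma nrBge (x y : C) : nr x - nr y <= nr (x - y).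
Proof.
have := nrD (x - y) y; rewrite subrK; lra.
Qed.

Definition ev (X : set C) (P : C -> Prop) :=
  exists r : R, forall z, X z -> r < nr z -> P z.

Lemma evW X (P Q : C -> Prop) : (forall z, P z -> Q z) -> ev X P -> ev X Q.
Proof. by move=> PQ [r hr]; exists r => z Xz hz; apply/PQ/hr. Qed.

Lemma ev2 X (P Q : C -> Prop) : ev X P -> ev X Q -> ev X (fun z => P z /\ Q z).
Proof.
move=> [r1 h1] [r2 h2]; exists (`|r1| + `|r2|) => z Xz hz.
have := ler_norm r1; have := ler_norm r2; have := normr_ge0 r1; have := normr_ge0 r2.
move=> *; split; [apply: h1 | apply: h2] => //; lra.
Qed.

Lemma ev_big X c : ev X (fun z => c < nr z).
Proof. by exists c. Qed.

Lemma ev_T X (P : C -> Prop) : (forall z, P z) -> ev X P.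
Proof. by move=> hP; exists 0 => z _ _; apply: hP. Qed.

Lemma ev_sub X (P : C -> Prop) : ev setT P -> ev X P.
Proof. by move=> [r hr]; exists r => z _ hz; apply: hr. Qed.

Lemma ev_nz X : ev X (fun z => z != 0).
Proof. by exists 0 => z _ hz; rewrite -nr_eq0 gt_eqF. Qed.

Lemma ev_imp X (P Q : C -> Prop) : ev X P -> ev X (fun z => P z -> Q z) -> ev X Q.
Proof. by move=> h1 h2; apply: evW (ev2 h1 h2) => z [] p; apply. Qed.

Definition lim X (h : C -> C) (L : C) :=
  forall e : R, 0 < e -> ev X (fun z => nr (h z - L) <= e).

Definition bnd X (h : C -> C) := exists M : R, ev X (fun z => nr (h z) <= M).

Lemma lim_cst X c : lim X (fun _ => c) c.
Proof. by move=> e he; apply: ev_T => z; rewrite subrr /nr normr0 /= ltW. Qed.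

Lemma lim_ext X (h1 h2 : C -> C) L :
  ev X (fun z => h1 z = h2 z) -> lim X h1 L -> lim X h2 L.
Proof.
by move=> he hl e /hl h; apply: ev_imp (ev2 he h) _; apply: ev_T => z [<-].
Qed.

Lemma bnd_ext X (h1 h2 : C -> C) :
  ev X (fun z => h1 z = h2 z) -> bnd X h1 -> bnd X h2.
Proof.
move=> he [M hM]; exists M; apply: ev_imp (ev2 he hM) _.
by apply: ev_T => z [<-].
Qed.

Lemma lim_sub_set X (h : C -> C) L : lim setT h L -> lim X h L.
Proof. by move=> hl e /hl; apply: ev_sub. Qed.

Lemma bnd_sub_set X (h : C -> C) : bnd setT h -> bnd X h.
Proof. by move=> [M hM]; exists M; apply: ev_sub. Qed.

Lemma lim0P X (h : C -> C) L : lim X h L <-> lim X (fun z => h z - L) 0.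
Proof.
by split=> hl e /hl; apply: evW => z; rewrite subr0.
Qed.

Lemma lim_to0 X (h : C -> C) L : lim X h L -> lim X (fun z => h z - L) 0.
Proof. by move/lim0P. Qed.

Lemma lim_of0 X (h : C -> C) L : lim X (fun z => h z - L) 0 -> lim X h L.
Proof. by move=> H; apply/(lim0P X h L). Qed.

Lemma lim_add X (h1 h2 : C -> C) L1 L2 :
  lim X h1 L1 -> lim X h2 L2 -> lim X (fun z => h1 z + h2 z) (L1 + L2).
Proof.
move=> l1 l2 e he.
have he2 : 0 < e / 2 by rewrite divr_gt0.
apply: evW (ev2 (l1 _ he2) (l2 _ he2)) => z [a1 a2].
have -> : h1 z + h2 z - (L1 + L2) = (h1 z - L1) + (h2 z - L2) by ring.
have := nrD (h1 z - L1) (h2 z - L2); lra.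
Qed.

Lemma lim_opp X (h : C -> C) L : lim X h L -> lim X (fun z => - h z) (- L).
Proof.
move=> l e /l; apply: evW => z.
by rewrite -opprD nrN.
Qed.

Lemma lim_subf X (h1 h2 : C -> C) L1 L2 :
  lim X h1 L1 -> lim X h2 L2 -> lim X (fun z => h1 z - h2 z) (L1 - L2).
Proof. by move=> l1 l2; apply: lim_add => //; apply: lim_opp. Qed.

Lemma lim_bnd X (h : C -> C) L : lim X h L -> bnd X h.
Proof.
move=> l; exists (nr L + 1); apply: evW (l 1 ltr01) => z hz.
have := nrD (h z - L) L; rewrite subrK; lra.
Qed.

Lemma bnd_cst X c : bnd X (fun _ => c).
Proof. exact: lim_bnd (lim_cst X c). Qed.

Lemma bnd_add X (h1 h2 : C -> C) : bnd X h1 -> bnd X h2 -> bnd X (fun z => h1 z + h2 z).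
Proof.
move=> [M1 b1] [M2 b2]; exists (M1 + M2); apply: evW (ev2 b1 b2) => z [c1 c2].
have := nrD (h1 z) (h2 z); lra.
Qed.

Lemma bnd_opp X (h : C -> C) : bnd X h -> bnd X (fun z => - h z).
Proof. by move=> [M b]; exists M; apply: evW b => z; rewrite nrN. Qed.

Lemma bnd_subf X (h1 h2 : C -> C) : bnd X h1 -> bnd X h2 -> bnd X (fun z => h1 z - h2 z).
Proof. by move=> b1 b2; apply: bnd_add => //; apply: bnd_opp. Qed.

Lemma bnd_mul X (h1 h2 : C -> C) : bnd X h1 -> bnd X h2 -> bnd X (fun z => h1 z * h2 z).
Proof.
move=> [M1 b1] [M2 b2]; exists (M1 * M2); apply: evW (ev2 b1 b2) => z [c1 c2].
rewrite nrM; apply: ler_pM => //; exact: nr_ge0.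
Qed.

Lemma lim0_bnd X (u v : C -> C) : lim X u 0 -> bnd X v -> lim X (fun z => u z * v z) 0.
Proof.
move=> lu [M bv] e he.
have hM : 0 < `|M| + 1 by rewrite ltr_wpDl.
have he' : 0 < e / (`|M| + 1) by rewrite divr_gt0.
apply: evW (ev2 (lu _ he') bv) => z [c1 c2].
rewrite subr0 nrM; rewrite subr0 in c1.
have -> : e = e / (`|M| + 1) * (`|M| + 1) by rewrite divfK // gt_eqF.
apply: ler_pM => //; try exact: nr_ge0.
have := ler_norm M; lra.
Qed.

Lemma bnd_lim0 X (u v : C -> C) : bnd X v -> lim X u 0 -> lim X (fun z => v z * u z) 0.
Proof.
by move=> bv lu; apply: lim_ext (lim0_bnd lu bv); apply: ev_T => z; rewrite mulrC.
Qed.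

Lemma lim_mul X (h1 h2 : C -> C) L1 L2 :
  lim X h1 L1 -> lim X h2 L2 -> lim X (fun z => h1 z * h2 z) (L1 * L2).
Proof.
move=> l1 l2; apply: lim_of0.
have e1 : lim X (fun z => (h1 z - L1) * h2 z) 0.
  by apply: lim0_bnd; [apply: lim_to0 | apply: lim_bnd l2].
have e2 : lim X (fun z => L1 * (h2 z - L2)) 0.
  by apply: bnd_lim0; [apply: bnd_cst | apply: lim_to0].
have := lim_add e1 e2; rewrite addr0 => l.
by apply: lim_ext l; apply: ev_T => z; ring.
Qed.

Lemma lim_ne0 X (h : C -> C) L : lim X h L -> L != 0 ->
  ev X (fun z => nr L / 2 <= nr (h z)).
Proof.
move=> l hL; have hL' : 0 < nr L / 2 by rewrite divr_gt0 // nr_gt0.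
apply: evW (l _ hL') => z hz; rewrite nrB in hz.
have := nrBge L (h z); lra.
Qed.

Lemma lim_ev_nz X (h : C -> C) L : lim X h L -> L != 0 -> ev X (fun z => h z != 0).
Proof.
move=> l hL; apply: evW (lim_ne0 l hL) => z hz.
rewrite -nr_eq0 gt_eqF //; apply: lt_le_trans hz.
by rewrite divr_gt0 // nr_gt0.
Qed.

Lemma lim_inv X (h : C -> C) L : lim X h L -> L != 0 ->
  lim X (fun z => (h z)^-1) L^-1.
Proof.
move=> l hL.
have hL2 : 0 < nr L / 2 by rewrite divr_gt0 // nr_gt0.
have bi : bnd X (fun z => (h z)^-1 * L^-1).
  exists ((nr L / 2)^-1 * (nr L)^-1); apply: evW (lim_ne0 l hL) => z hz.
  rewrite nrM !nrV; apply: ler_pM => //; try by rewrite invr_ge0 nr_ge0.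
  by rewrite lef_pV2 // posrE (lt_le_trans hL2 hz).
have := lim0_bnd (lim_to0 (lim_opp l)) bi => l2.
apply: lim_of0; apply: lim_ext l2.
apply: evW (lim_ev_nz l hL) => z hz.
field; by rewrite hz hL.
Qed.

Lemma lim_invz X : lim X (fun z => z^-1) 0.
Proof.
move=> e he; exists e^-1 => z _ hz.
have hz0 : 0 < nr z by apply: lt_trans hz; rewrite invr_gt0.
rewrite subr0 nrV -div1r ler_pdivrMr //.
have : e * e^-1 < e * nr z by rewrite ltr_pM2l.
rewrite mulfV ?gt_eqF //; lra.
Qed.

Lemma lim_X X (h : C -> C) L k : lim X h L -> lim X (fun z => h z ^+ k) (L ^+ k).
Proof.
move=> l; elim: k => [|k ih].
  by rewrite expr0; apply: lim_ext (lim_cst X 1); apply: ev_T => z; rewrite expr0.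
rewrite exprS; apply: lim_ext (lim_mul l ih); apply: ev_T => z; by rewrite exprS.
Qed.

Lemma lim_sum X (I : Type) (s : seq I) (F : I -> C -> C) (L : I -> C) :
  (forall i, lim X (F i) (L i)) ->
  lim X (fun z => \sum_(i <- s) F i z) (\sum_(i <- s) L i).
Proof.
move=> hF; elim: s => [|i s ih].
  rewrite big_nil; apply: lim_ext (lim_cst X 0); apply: ev_T => z; by rewrite big_nil.
rewrite big_cons; apply: lim_ext (lim_add (hF i) ih); apply: ev_T => z; by rewrite big_cons.
Qed.

Lemma lim_scal X (h : C -> C) c : lim X h 0 -> lim X (fun z => c * h z) 0.
Proof. by move=> l; apply: bnd_lim0 l; apply: bnd_cst. Qed.

Lemma lim_z0 X k : lim X (fun z => z^-1 ^+ k.+1) 0.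
Proof. by have := lim_X k.+1 (lim_invz X); rewrite expr0n. Qed.

Lemma leP' (x y : C) (M : R) : (`|x| <= M%:C * `|y|) <-> (nr x <= M * nr y).
Proof. by rewrite !nrE -rmorphM lecR. Qed.

Lemma ltP' (r : R) (z : C) : (r%:C < `|z|) <-> (r < nr z).
Proof. by rewrite !nrE ltcR. Qed.

Lemma loP X (f g : C -> C) : littleo_at_oo X f g <->
  forall e : R, 0 < e -> ev X (fun z => nr (f z) <= e * nr (g z)).
Proof.
split=> h e /h [r hr]; exists r => z Xz hz.
  by apply/leP'; apply: hr => //; apply/ltP'.
by apply/leP'; apply: hr => //; apply/ltP'.
Qed.

Lemma bOP X (f g : C -> C) : bigO_at_oo X f g <->
  exists M : R, ev X (fun z => nr (f z) <= M * nr (g z)).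
Proof.
split=> -[M [r hr]]; exists M; exists r => z Xz hz.
  by apply/leP'; apply: hr => //; apply/ltP'.
by apply/leP'; apply: hr => //; apply/ltP'.
Qed.

Lemma lo_lim X (f g : C -> C) : littleo_at_oo X f g -> lim X (fun z => f z / g z) 0.
Proof.
move/loP=> h e he; apply: evW (h e he) => z hz; rewrite subr0.
have [g0|g0] := eqVneq (g z) 0.
  by rewrite g0 invr0 mulr0 nr0 ltW.
by rewrite nrM nrV ler_pdivrMr ?nr_gt0.
Qed.

Lemma lim_lo X (f g : C -> C) : lim X (fun z => f z / g z) 0 ->
  ev X (fun z => g z != 0) -> littleo_at_oo X f g.
Proof.
move=> l nz; apply/loP => e he; apply: evW (ev2 (l e he) nz) => z [hz gz].
rewrite subr0 nrM nrV ler_pdivrMr ?nr_gt0 // in hz.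
Qed.

Lemma bO_bnd X (f g : C -> C) : bigO_at_oo X f g -> bnd X (fun z => f z / g z).
Proof.
move/bOP=> [M hM]; exists `|M|; apply: evW hM => z hz.
have [g0|g0] := eqVneq (g z) 0; first by rewrite g0 invr0 mulr0 nr0.
rewrite nrM nrV ler_pdivrMr ?nr_gt0 //; apply: le_trans hz _.
by rewrite ler_wpM2r ?nr_ge0 ?ler_norm.
Qed.

Lemma bnd_bO X (f g : C -> C) : bnd X (fun z => f z / g z) ->
  ev X (fun z => g z != 0) -> bigO_at_oo X f g.
Proof.
move=> [M hM] nz; apply/bOP; exists M; apply: evW (ev2 hM nz) => z [hz gz].
by rewrite nrM nrV ler_pdivrMr ?nr_gt0 // in hz.
Qed.

Lemma eqv_lim X (f g : C -> C) : asym_equiv X f g -> ev X (fun z => g z != 0) ->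
  lim X (fun z => f z / g z) 1.
Proof.
move=> /lo_lim l nz; apply: lim_of0; apply: lim_ext l.
by apply: evW nz => z gz; field.
Qed.

Lemma lim_eqv X (f g : C -> C) : lim X (fun z => f z / g z) 1 ->
  ev X (fun z => g z != 0) -> asym_equiv X f g.
Proof.
move=> l nz; apply: lim_lo => //; have := lim_to0 l => l'.
by apply: lim_ext l'; apply: evW nz => z gz; field.
Qed.

Lemma ev_pow_nz X k : ev X (fun z => (z ^+ k)^-1 != 0).
Proof. by apply: evW (ev_nz X) => z hz; rewrite invr_eq0 expf_neq0. Qed.

Lemma lo_pow X (f : C -> C) k : littleo_at_oo X f (fun z => (z ^+ k)^-1) <->
  lim X (fun z => f z * z ^+ k) 0.
Proof.
split=> [/lo_lim l|l].
  by apply: lim_ext l; apply: ev_T => z; rewrite invrK.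
apply: lim_lo (ev_pow_nz X k).
by apply: lim_ext l; apply: ev_T => z; rewrite invrK.
Qed.

Lemma bO_pow X (f : C -> C) k : bigO_at_oo X f (fun z => (z ^+ k)^-1) <->
  bnd X (fun z => f z * z ^+ k).
Proof.
split=> [/bO_bnd l|l].
  by apply: bnd_ext l; apply: ev_T => z; rewrite invrK.
apply: bnd_bO (ev_pow_nz X k).
by apply: bnd_ext l; apply: ev_T => z; rewrite invrK.
Qed.

Lemma lim_mulc X (h : C -> C) L c : lim X h L -> lim X (fun z => h z * c) (L * c).
Proof. by move=> l; apply: lim_mul l (lim_cst X c). Qed.

Lemma eqv_pow X (f : C -> C) k (c : C) : c != 0 ->
  (asym_equiv X f (fun z => c / z ^+ k) <-> lim X (fun z => f z * z ^+ k) c).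
Proof.
move=> c0; have nz : ev X (fun z => c / z ^+ k != 0).
  by apply: evW (ev_nz X) => z hz; rewrite mulf_neq0 // invr_eq0 expf_neq0.
split=> [/eqv_lim /(_ nz) l|l].
  have := lim_mulc c l; rewrite mul1r => l'; apply: lim_ext l'.
  by apply: evW (ev_nz X) => z hz; field; rewrite c0 expf_neq0.
apply: lim_eqv nz; have := lim_mulc c^-1 l; rewrite mulfV // => l'.
by apply: lim_ext l'; apply: evW (ev_nz X) => z hz; field; rewrite c0 expf_neq0.
Qed.

Lemma lim_nz_bnd_inv X (h : C -> C) L : lim X h L -> L != 0 -> bnd X (fun z => (h z)^-1).
Proof. by move=> l hL; apply: lim_bnd (lim_inv l hL). Qed.

End Asym.


Section CF.
Variable R : realType.
Local Notation C := R[i].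
Variables a b : nat -> R.
Hypothesis Ha : forall n, (0 < n)%N -> 0 < a n.

Fixpoint seq2 (x0 x1 : {poly C}) (n : nat) : {poly C} * {poly C} :=
  match n with
  | 0 => (x0, x1)
  | n'.+1 => ((seq2 x0 x1 n').2,
              ('X + (b n)%:C%:P) * (seq2 x0 x1 n').2 - (a n)%:C%:P * (seq2 x0 x1 n').1)
  end.

Lemma rec2 x0 x1 n : (seq2 x0 x1 n.+2).1 =
  ('X + (b n.+1)%:C%:P) * (seq2 x0 x1 n.+1).1 - (a n.+1)%:C%:P * (seq2 x0 x1 n).1.
Proof. by []. Qed.

Definition pp n := (seq2 (-1) 0 n).1.
Definition qq n := (seq2 0 1 n).1.
Definition P n (z : C) := (pp n).[z].
Definition Q n (z : C) := (qq n).[z].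

Lemma ppS n : pp n.+2 = ('X + (b n.+1)%:C%:P) * pp n.+1 - (a n.+1)%:C%:P * pp n.
Proof. exact: rec2. Qed.
Lemma qqS n : qq n.+2 = ('X + (b n.+1)%:C%:P) * qq n.+1 - (a n.+1)%:C%:P * qq n.
Proof. exact: rec2. Qed.
Lemma pp0 : pp 0 = -1. Proof. by []. Qed.
Lemma pp1 : pp 1 = 0. Proof. by []. Qed.
Lemma qq0 : qq 0 = 0. Proof. by []. Qed.
Lemma qq1 : qq 1 = 1. Proof. by []. Qed.

Lemma PS n z : P n.+2 z = (z + (b n.+1)%:C) * P n.+1 z - (a n.+1)%:C * P n z.
Proof. by rewrite /P ppS !hornerE. Qed.
Lemma QS n z : Q n.+2 z = (z + (b n.+1)%:C) * Q n.+1 z - (a n.+1)%:C * Q n z.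
Proof. by rewrite /Q qqS !hornerE. Qed.
Lemma P0 z : P 0 z = -1. Proof. by rewrite /P pp0 hornerN hornerC. Qed.
Lemma P1 z : P 1 z = 0. Proof. by rewrite /P pp1 horner0. Qed.
Lemma Q0 z : Q 0 z = 0. Proof. by rewrite /Q qq0 horner0. Qed.
Lemma Q1 z : Q 1 z = 1. Proof. by rewrite /Q qq1 hornerC. Qed.

Definition Ar n := \prod_(1 <= i < n.+1) a i.

Lemma ArS n : Ar n.+1 = Ar n * a n.+1.
Proof. by rewrite /Ar big_nat_recr. Qed.

Lemma Ar0 : Ar 0 = 1.
Proof. by rewrite /Ar big_geq. Qed.

Lemma Ar_gt0 n : 0 < Ar n.
Proof.
elim: n => [|n ih]; first by rewrite Ar0.
by rewrite ArS mulr_gt0 // Ha.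
Qed.

Lemma ArC_neq0 n : (Ar n)%:C != 0.
Proof. by rewrite -nr_eq0 nrC gt_eqF // normr_gt0 gt_eqF // Ar_gt0. Qed.

Lemma a_neq0 n : (a n.+1)%:C != 0.
Proof. by rewrite -nr_eq0 nrC gt_eqF // normr_gt0 gt_eqF // Ha. Qed.

Lemma det n : pp n.+1 * qq n - pp n * qq n.+1 = (Ar n)%:C%:P.
Proof.
elim: n => [|n ih].
  by rewrite pp1 qq0 pp0 qq1 Ar0 mul0r sub0r mulN1r opprK.
have -> : pp n.+2 * qq n.+1 - pp n.+1 * qq n.+2 =
   (a n.+1)%:C%:P * (pp n.+1 * qq n - pp n * qq n.+1).
  rewrite ppS qqS; move: ('X + _) ((a n.+1)%:C%:P) (pp n.+1) (pp n) (qq n.+1) (qq n) => x c p1 p0 q1 q0.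
  ring.
by rewrite ih ArS !rmorphM /= mulrC.
Qed.

Lemma detz n z : P n.+1 z * Q n z - P n z * Q n.+1 z = (Ar n)%:C.
Proof. by rewrite /P /Q -!hornerM -hornerN -hornerD det hornerC. Qed.

Lemma qq_size n : [/\ qq n.+1 \is monic, size (qq n.+1) = n.+1 & (size (qq n) <= n)%N].
Proof.
elim: n => [|n [m s s']]; first by rewrite qq1 qq0 monic1 size_poly1 size_poly0.
have m2 : ('X + (b n.+1)%:C%:P) * qq n.+1 \is monic by rewrite monicMl ?monicXaddC.
have s2 : size (('X + (b n.+1)%:C%:P) * qq n.+1) = n.+2.
  by rewrite size_monicM ?monicXaddC ?monic_neq0 // size_XaddC s.
have s3 : (size (- ((a n.+1)%:C%:P * qq n))%R <= n)%N.
  by rewrite size_polyN mul_polyC; apply: leq_trans (size_scale_leq _ _) _.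
have lt3 : (size (- ((a n.+1)%:C%:P * qq n))%R < size (('X + (b n.+1)%:C%:P) * qq n.+1)%R)%N.
  rewrite s2 ltnS; exact: leq_trans s3 (leqnSn n).
split; last by rewrite s.
- by rewrite qqS monicE lead_coefDl // (eqP m2).
- by rewrite qqS size_polyDl.
Qed.

Lemma pp_size n : (size (pp n.+1) <= n)%N /\ (size (pp n) <= n.+1)%N.
Proof.
elim: n => [|n [s s']]; first by rewrite pp1 pp0 size_poly0 size_polyN size_poly1.
split; last exact: leq_trans s (leqW (leqnSn n)).
rewrite ppS (leq_trans (size_polyD _ _)) // geq_max; apply/andP; split.
  rewrite (leq_trans (size_polyMleq _ _)) // size_XaddC /=.
  by case: (size (pp n.+1)) s.
by rewrite size_polyN mul_polyC; apply: leq_trans (size_scale_leq _ _) _.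
Qed.

Lemma nr_lb3 (x y w : C) : nr x - nr y - nr w <= nr (x + y - w).
Proof.
have h1 := nrD (x + y - w) (w - y).
rewrite (_ : x + y - w + (w - y) = x) in h1; last by ring.
have h2 := nrD w (- y); rewrite nrN in h2.
lra.
Qed.

Lemma MB n : exists r : R, forall (z u : C), r < nr z -> nr u <= 1 ->
  Q n.+1 z - u * Q n z != 0 /\
  cf_nest a b n z u = (P n.+1 z - u * P n z) / (Q n.+1 z - u * Q n z).
Proof.
elim: n => [|n [r ih]].
  exists 0 => z u _ _; rewrite Q1 Q0 P1 P0 mulr0 subr0 oner_neq0 divr1; split => //.
  by rewrite /= sub0r mulrN1 opprK.
exists (`|r| + `|b n.+1| + a n.+1 + 1) => z u hz hu.
have han := Ha (ltn0Sn n).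
set D := z + (b n.+1)%:C - u.
have hD : a n.+1 <= nr D.
  have := nr_lb3 z (b n.+1)%:C u; rewrite nrC -/D.
  have := normr_ge0 r; lra.
have D0 : D != 0 by rewrite -nr_eq0 gt_eqF // (lt_le_trans han hD).
set v := (a n.+1)%:C / D.
have hv : nr v <= 1.
  rewrite /v nrM nrV nrC ger0_norm; last exact: ltW han.
  rewrite ler_pdivrMr ?mul1r //; last exact: lt_le_trans han hD.
have hr : r < nr z by have := ler_norm r; have := normr_ge0 (b n.+1); lra.
have [nz e] := ih z v hr hv.
have ec : cf_nest a b n.+1 z u = cf_nest a b n z v by [].
have hzb : z + (b n.+1)%:C = D + u by rewrite /D; ring.
clearbody D.
have eq1 : Q n.+2 z - u * Q n.+1 z = D * (Q n.+1 z - v * Q n z).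
  rewrite QS hzb /v; move: D0 (Q n.+1 z) (Q n z) ((a n.+1)%:C) => D0' q1 q0 c.
  by field.
have nz2 : Q n.+2 z - u * Q n.+1 z != 0 by rewrite eq1 mulf_neq0.
split => //.
rewrite ec e.
move: nz2; rewrite eq1 PS hzb => nz2.
rewrite /v; move: nz nz2 D0; rewrite /v.
move: (Q n.+1 z) (Q n z) (P n.+1 z) (P n z) ((a n.+1)%:C) => q1 q0 p1 p0 c nz nz2 D0'.
rewrite mulf_eq0 negb_or in nz2.
field.
have -> : q1 * D - c * q0 = D * (q1 - c / D * q0) by field.
by rewrite D0' mulf_neq0.
Qed.
End CF.


Section Lims.
Variable R : realType.
Local Notation C := R[i].

Lemma poly_lim (X : set C) (p : {poly C}) n : (size p <= n.+1)%N ->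
  lim X (fun z => p.[z] / z ^+ n) p`_n.
Proof.
move=> hs.
have e : ev X (fun z => \sum_(i < n.+1) p`_i * (z^-1) ^+ (n - i) = p.[z] / z ^+ n).
  apply: evW (ev_nz X) => z z0.
  rewrite (horner_coef_wide z hs) mulr_suml; apply: eq_bigr => i _.
  have hi : (i <= n)%N by rewrite -ltnS ltn_ord.
  have -> : z ^+ n = z ^+ i * z ^+ (n - i) by rewrite -exprD subnKC.
  rewrite exprVn; field.
  by rewrite !expf_neq0.
apply: (lim_ext e).
have -> : p`_n = \sum_(i < n.+1) p`_i * 0 ^+ (n - i).
  rewrite big_ord_recr /= subnn expr0 mulr1 big1 ?add0r // => i _.
  have : (n - i != 0)%N by rewrite subn_eq0 -ltnNge ltn_ord.
  by rewrite expr0n => /negPf ->; rewrite mulr0.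
apply: lim_sum => i; apply: lim_mul; first exact: lim_cst.
exact: lim_X (lim_invz X).
Qed.

Variables a b : nat -> R.
Hypothesis Ha : forall n, (0 < n)%N -> 0 < a n.
Local Notation w := (cf_approx a b).
Local Notation P := (P a b).
Local Notation Q := (Q a b).
Local Notation Ar := (Ar a).

Lemma Qlim X n : lim X (fun z => Q n.+1 z / z ^+ n) 1.
Proof.
have [m s _] := qq_size a b n.
have := poly_lim X (n:=n) (p:=qq a b n.+1); rewrite s => /(_ (leqnn _)).
by move/monicP: m; rewrite lead_coefE s /= => ->.
Qed.

Lemma Wev n : ev setT (fun z => Q n.+1 z != 0 /\ w n z = P n.+1 z / Q n.+1 z).
Proof.
have [r h] := MB b Ha n; exists r => z _ hz.
have := h z 0 hz; rewrite nr0 ler01 => /(_ isT) [].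
by rewrite !mul0r !subr0 => nz e; split.
Qed.

Definition d n z := w n.+1 z - w n z.

Lemma W1 X n : lim X (fun z => d n z * z ^+ (2 * n).+1) (Ar n.+1)%:C.
Proof.
apply: lim_sub_set.
have e : ev setT (fun z => (Ar n.+1)%:C * ((Q n.+2 z / z ^+ n.+1) * (Q n.+1 z / z ^+ n))^-1
     = d n z * z ^+ (2 * n).+1).
  apply: evW (ev2 (ev2 (Wev n) (Wev n.+1)) (ev_nz _)) => z [[[q1 e1] [q2 e2]] z0].
  rewrite /d e1 e2 -(detz a b n.+1 z).
  have -> : (2 * n).+1 = (n.+1 + n)%N by rewrite addSn addnn mul2n.
  rewrite exprD; move: q1 q2; move: (Q n.+1 z) (Q n.+2 z) (P n.+1 z) (P n.+2 z) => q1 q2 p1 p2 h1 h2.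
  field; rewrite ?expf_neq0 //; side.
apply: (lim_ext e).
rewrite -[X in lim _ _ X]mulr1; apply: lim_mul; first exact: lim_cst.
rewrite -invr1; apply: lim_inv; last exact: oner_neq0.
rewrite -[X in lim _ _ X]mulr1; apply: lim_mul; exact: Qlim.
Qed.

Lemma d_nz X n : ev X (fun z => d n z != 0).
Proof.
apply: evW (lim_ev_nz (W1 X n) (ArC_neq0 Ha _)) => z.
by rewrite mulf_eq0 negb_or => /andP [].
Qed.

End Lims.

Section Chain.
Variable R : realType.
Local Notation C := R[i].
Variables a b : nat -> R.
Hypothesis Ha : forall n, (0 < n)%N -> 0 < a n.
Local Notation w := (cf_approx a b).
Local Notation P := (P a b).
Local Notation Q := (Q a b).
Local Notation Ar := (Ar a).
Local Notation d := (d a b).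
Variable m : nat -> R.

Definition S j (z : C) := \sum_(0 <= k < j) (m k)%:C / z ^+ k.+1.

Lemma SS j z : S j.+1 z = S j z + (m j)%:C / z ^+ j.+1.
Proof. by rewrite /S big_nat_recr. Qed.

Hypothesis Hw : forall n, (0 < n)%N ->
  littleo_at_oo setT (fun z => w n z - S (2 * n) z) (fun z => (z ^+ (2 * n))^-1).

Lemma W2 n : bnd setT (fun z => (w n z - S (2 * n) z) * z ^+ (2 * n).+1).
Proof.
have l1 : lim setT (fun z => (w n.+1 z - S (2 * n.+1) z) * z ^+ (2 * n.+1)) 0.
  by apply/lo_pow; apply: Hw.
have l2 := lim0_bnd l1 (lim_bnd (lim_invz setT)).
have e : ev setT (fun z =>
   (w n.+1 z - S (2 * n.+1) z) * z ^+ (2 * n.+1) * z^-1 - d n z * z ^+ (2 * n).+1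
   + ((m (2 * n))%:C + (m (2 * n).+1)%:C * z^-1)
   = (w n z - S (2 * n) z) * z ^+ (2 * n).+1).
  apply: evW (ev_nz _) => z z0.
  have -> : (2 * n.+1 = (2 * n).+2)%N by rewrite mulnS add2n.
  rewrite !SS /d; set k := (2 * n)%N.
  have zk0 : z ^+ k != 0 by rewrite expf_neq0.
  rewrite !exprS; move: zk0; move: (w n.+1 z) (w n z) (S k z) (z ^+ k) => w1 w0 s zk zk0.
  by field; side.
apply: (bnd_ext e); apply: bnd_add; first apply: bnd_subf.
- exact: lim_bnd l2.
- exact: lim_bnd (W1 b Ha setT n).
- apply: lim_bnd (lim_add (lim_cst _ _) (lim_mul (lim_cst _ _) (lim_invz _))).
Qed.

Variable X : set C.
Variable f : C -> C.

Definition Vn n := bnd X (fun z => (f z - w n z) * z ^+ (2 * n).+1).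
Definition LV n := lim X (fun z => (f z - w n z) * z ^+ (2 * n).+1) (Ar n.+1)%:C.
Definition E j := bnd X (fun z => (f z - S j z) * z ^+ j.+1).

Lemma step_LV n : Vn n.+1 -> LV n.
Proof.
move=> hV.
have e : ev X (fun z => (f z - w n.+1 z) * z ^+ (2 * n.+1).+1 * z^-1 ^+ 2
   + d n z * z ^+ (2 * n).+1 = (f z - w n z) * z ^+ (2 * n).+1).
  apply: evW (ev_nz _) => z z0.
  have -> : ((2 * n.+1).+1 = ((2 * n).+1).+2)%N by rewrite mulnS add2n.
  set k := (2 * n).+1; have zk0 : z ^+ k != 0 by rewrite expf_neq0.
  rewrite /d !exprS expr0 mulr1; move: zk0.
  move: (w n.+1 z) (w n z) (f z) (z ^+ k) => w1 w0 fz zk zk0.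
  by field; side.
apply: (lim_ext e).
rewrite -[X in lim _ _ X]add0r; apply: lim_add; last exact: W1.
exact: bnd_lim0 hV (lim_z0 X 1).
Qed.

Lemma V_down n k : Vn (n + k) -> Vn n.
Proof.
elim: k => [|k ih]; first by rewrite addn0.
by rewrite addnS => /step_LV /lim_bnd /ih.
Qed.

Lemma E_step j : E j.+1 -> E j.
Proof.
move=> hE.
have e : ev X (fun z => (f z - S j.+1 z) * z ^+ j.+2 * z^-1 + (m j)%:C
   = (f z - S j z) * z ^+ j.+1).
  apply: evW (ev_nz _) => z z0.
  have zk0 : z ^+ j.+1 != 0 by rewrite expf_neq0.
  rewrite SS (exprS z j.+1); move: zk0; move: (S j z) (f z) (z ^+ j.+1) => s fz zk zk0.
  by field; side.
apply: (bnd_ext e); apply: bnd_add; last exact: bnd_cst.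
exact: lim_bnd (bnd_lim0 hE (lim_invz X)).
Qed.

Lemma E_down j k : E (j + k) -> E j.
Proof.
elim: k => [|k ih]; first by rewrite addn0.
by rewrite addnS => /E_step /ih.
Qed.

Lemma V_E n : Vn n -> E (2 * n).
Proof.
move=> hV.
have e : ev X (fun z => (f z - w n z) * z ^+ (2 * n).+1 + (w n z - S (2 * n) z) * z ^+ (2 * n).+1
   = (f z - S (2 * n) z) * z ^+ (2 * n).+1).
  by apply: ev_T => z; ring.
apply: (bnd_ext e); apply: bnd_add => //; exact: bnd_sub_set (W2 n).
Qed.

Lemma E_V n : E (2 * n) -> Vn n.
Proof.
move=> hE.
have e : ev X (fun z => (f z - S (2 * n) z) * z ^+ (2 * n).+1 - (w n z - S (2 * n) z) * z ^+ (2 * n).+1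
   = (f z - w n z) * z ^+ (2 * n).+1).
  by apply: ev_T => z; ring.
apply: (bnd_ext e); apply: bnd_subf => //; exact: bnd_sub_set (W2 n).
Qed.

Definition AE := asym_expansion X f (fun k => (m k)%:C).

Lemma AE_E : AE -> forall j, E j.
Proof.
move=> H j.
have l : lim X (fun z => (f z - S j.+1 z) * z ^+ j.+1) 0 by apply/lo_pow; exact: (H j).
have e : ev X (fun z => (f z - S j.+1 z) * z ^+ j.+1 + (m j)%:C = (f z - S j z) * z ^+ j.+1).
  apply: evW (ev_nz _) => z z0.
  have zk0 : z ^+ j.+1 != 0 by rewrite expf_neq0.
  rewrite SS; move: zk0; move: (S j z) (f z) (z ^+ j.+1) => s fz zk zk0.
  by field; side.
apply: (bnd_ext e); apply: bnd_add; [exact: lim_bnd l | exact: bnd_cst].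
Qed.

Lemma E_AE : (forall j, E j) -> AE.
Proof.
move=> H j; apply/lo_pow.
have l := lim0_bnd (lim_invz X) (H j.+1).
have e : ev X (fun z => z^-1 * ((f z - S j.+1 z) * z ^+ j.+2) = (f z - S j.+1 z) * z ^+ j.+1).
  apply: evW (ev_nz _) => z z0.
  rewrite (exprS z j.+1); move: (S j.+1 z) (f z) (z ^+ j.+1) => s fz zk.
  by field; side.
exact: (lim_ext e).
Qed.

Lemma AE_V : AE -> forall n, Vn n.
Proof. by move=> H n; apply: E_V; apply: AE_E. Qed.

Lemma V_AE : (forall n, Vn n) -> AE.
Proof.
move=> H; apply: E_AE => j; apply: (@E_down j j).
by rewrite addnn -mul2n; apply: V_E.
Qed.

End Chain.


Section Chain2.
Variable R : realType.
Local Notation C := R[i].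
Variables a b : nat -> R.
Hypothesis Ha : forall n, (0 < n)%N -> 0 < a n.
Local Notation w := (cf_approx a b).
Local Notation P := (P a b).
Local Notation Q := (Q a b).
Local Notation Ar := (Ar a).
Local Notation d := (d a b).
Variable X : set C.
Variable f : C -> C.
Local Notation V := (Vn a b X f).
Local Notation LVn := (LV a b X f).

Lemma V_LV : (forall n, V n) -> forall n, LVn n.
Proof. by move=> H n; exact: (step_LV Ha (H n.+1)). Qed.

Lemma LV_V : (forall n, LVn n) -> forall n, V n.
Proof. by move=> H n; exact: (lim_bnd (H n)). Qed.

Lemma lo_d k : littleo_at_oo X (d k.+1) (d k).
Proof.
apply: lim_lo; last exact: d_nz.
have e : ev X (fun z => d k.+1 z * z ^+ (2 * k.+1).+1 * (d k z * z ^+ (2 * k).+1)^-1 * z^-1 ^+ 2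
   = d k.+1 z / d k z).
  apply: evW (ev2 (ev_nz _) (d_nz b Ha X k)) => z [z0 d0].
  have -> : ((2 * k.+1).+1 = ((2 * k).+1).+2)%N by rewrite mulnS add2n.
  set j := (2 * k).+1; have zk0 : z ^+ j != 0 by rewrite expf_neq0.
  rewrite (exprS z j.+1) (exprS z j) expr2; move: zk0 d0.
  move: (d k.+1 z) (d k z) (z ^+ j) => d1 d0 zk zk0 d00.
  by field; side.
apply: (lim_ext e).
have l := lim_mul (lim_mul (W1 b Ha X k.+1) (lim_inv (W1 b Ha X k) (ArC_neq0 Ha _))) (lim_z0 X 1).
by rewrite mulr0 in l.
Qed.

Lemma V_ii : (forall n, V n) -> cf_asymp X f w.
Proof.
move=> H; split.
  by case=> [|k] // _; exact: lo_d.
move=> k; apply: bnd_bO; last exact: d_nz.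
have e : ev X (fun z => (f z - w k z) * z ^+ (2 * k).+1 * (d k z * z ^+ (2 * k).+1)^-1
   = (f z - w k z) / d k z).
  apply: evW (ev2 (ev_nz _) (d_nz b Ha X k)) => z [z0 d0].
  have zk0 : z ^+ (2 * k).+1 != 0 by rewrite expf_neq0.
  move: zk0 d0; move: (d k z) (f z - w k z) (z ^+ (2 * k).+1) => d0 u zk zk0 d00.
  by field; side.
apply: (bnd_ext e); apply: bnd_mul; first exact: H.
exact: lim_nz_bnd_inv (W1 b Ha X k) (ArC_neq0 Ha _).
Qed.

Lemma ii_V : cf_asymp X f w -> forall n, V n.
Proof.
move=> [_ H] n; have := bO_bnd (H n) => hb.
have e : ev X (fun z => (f z - w n z) / d n z * (d n z * z ^+ (2 * n).+1)
   = (f z - w n z) * z ^+ (2 * n).+1).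
  apply: evW (d_nz b Ha X n) => z d0.
  move: d0; move: (d n z) (f z - w n z) (z ^+ (2 * n).+1) => d0 u zk d00.
  by field; side.
apply: (bnd_ext e); apply: bnd_mul; first exact: hb.
exact: lim_bnd (W1 b Ha X n).
Qed.

Lemma vi_V : (forall N : nat, exists2 n : nat, (N <= n)%N &
        bigO_at_oo X (fun z => f z - w n z) (fun z => (z ^+ (2 * n).+1)^-1)) ->
  forall n, V n.
Proof.
move=> H n; have [n' hn hb] := H n.
apply: (@V_down _ a b Ha X f n (n' - n)); rewrite subnKC //.
exact/bO_pow.
Qed.


Fixpoint gg (n : nat) (z : C) : C :=
  match n with
  | 0 => f z
  | n'.+1 => z + (b n)%:C - (a n)%:C / gg n' z
  end.

Lemma gg_nest n z : cf_nest a b n z (gg n z) = f z.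
Proof.
elim: n => [|n ih] //=.
have -> : z + (b n.+1)%:C - (z + (b n.+1)%:C - (a n.+1)%:C / gg n z) = (a n.+1)%:C / gg n z.
  by move: (gg n z) => g; ring.
by rewrite invf_div mulrC divfK ?(a_neq0 Ha).
Qed.

Definition Dk k z := P k z - f z * Q k z.

Lemma DkS k z : Dk k.+2 z = (z + (b k.+1)%:C) * Dk k.+1 z - (a k.+1)%:C * Dk k z.
Proof. by rewrite /Dk PS QS; ring. Qed.

Lemma gg_D n z : (forall j, (0 < j <= n)%N -> Dk j z != 0) -> gg n z = Dk n.+1 z / Dk n z.
Proof.
elim: n => [|n ih] H.
  rewrite /Dk /= P1 P0 Q1 Q0 mulr0 subr0 mulr1 sub0r.
  by rewrite invrN invr1 mulrN1 opprK.
rewrite /= ih; last by move=> j /andP [j0 jn]; apply: H; rewrite j0 (leq_trans jn).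
have D1 : Dk n.+1 z != 0 by apply: H; rewrite ltn0Sn leqnn.
rewrite invf_div DkS; move: D1; move: (Dk n.+1 z) (Dk n z) => x y hx.
by field; side.
Qed.

Lemma DL k : LVn k -> lim X (fun z => Dk k.+1 z * z ^+ k.+1) (- (Ar k.+1)%:C).
Proof.
move=> hL.
have e : ev X (fun z => - ((Q k.+1 z / z ^+ k) * ((f z - w k z) * z ^+ (2 * k).+1))
   = Dk k.+1 z * z ^+ k.+1).
  apply: evW (ev2 (ev_sub X (Wev b Ha k)) (ev_nz X)) => z [[qz ew] z0].
  rewrite ew /Dk.
  have -> : z ^+ (2 * k).+1 = z * (z ^+ k * z ^+ k) by rewrite exprS mul2n -addnn exprD.
  have zk0 : z ^+ k != 0 by rewrite expf_neq0.
  rewrite (exprS z k); move: qz zk0; move: (Q k.+1 z) (P k.+1 z) (f z) (z ^+ k) => q p fz zk qz zk0.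
  by field; side.
apply: (lim_ext e).
have l := lim_opp (lim_mul (Qlim a b X k) hL); rewrite mul1r in l; exact: l.
Qed.

Lemma allnz n : (forall k, LVn k) ->
  ev X (fun z => forall j, (0 < j <= n)%N -> Dk j z != 0).
Proof.
move=> H; elim: n => [|n ih]; first by apply: ev_T => z [|j].
have nz : ev X (fun z => Dk n.+1 z != 0).
  have nA : - (Ar n.+1)%:C != 0 by rewrite oppr_eq0 (ArC_neq0 Ha).
  by apply: evW (lim_ev_nz (DL (H n)) nA) => z; rewrite mulf_eq0 negb_or => /andP [].
apply: evW (ev2 ih nz) => z [h1 h2] j /andP [j0].
rewrite leq_eqVlt => /orP [/eqP -> //|]; rewrite ltnS => jn.
by apply: h1; rewrite j0 jn.
Qed.

Lemma LV_iii : (forall n, LVn n) -> forall n : nat, (0 < n)%N -> exists fn : C -> C,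
        (forall z, X z -> f z = cf_nest a b n z (fn z)) /\
        asym_equiv X fn (fun z => (a n.+1)%:C / z).
Proof.
move=> H n n0; exists (gg n); split; first by move=> z _; rewrite gg_nest.
case: n n0 => [//|k] _.
suff : lim X (fun z => gg k.+1 z * z ^+ 1) (a k.+2)%:C.
  by move/(eqv_pow _ _ _ (a_neq0 Ha k.+1)).
have e : ev X (fun z => (Dk k.+2 z * z ^+ k.+2) * (Dk k.+1 z * z ^+ k.+1)^-1
   = gg k.+1 z * z ^+ 1).
  apply: evW (ev2 (allnz k.+1 H) (ev_nz X)) => z [hz z0].
  rewrite (gg_D hz) expr1.
  have D1 : Dk k.+1 z != 0 by apply: hz; rewrite ltn0Sn leqnn.
  have zk0 : z ^+ k.+1 != 0 by rewrite expf_neq0.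
  rewrite (exprS z k.+1); move: D1 zk0; move: (Dk k.+2 z) (Dk k.+1 z) (z ^+ k.+1) => x y zk D1 zk0.
  by field; side.
apply: (lim_ext e).
have nA : - (Ar k.+1)%:C != 0 by rewrite oppr_eq0 (ArC_neq0 Ha).
have l := lim_mul (DL (H k.+1)) (lim_inv (DL (H k)) nA).
have -> : (a k.+2)%:C = - (Ar k.+2)%:C * (- (Ar k.+1)%:C)^-1.
  have A0 := ArC_neq0 Ha k.+1.
  rewrite (ArS a k.+1) rmorphM /=; move: A0; move: ((Ar k.+1)%:C) ((a k.+2)%:C) => x y x0.
  by field; side.
exact: l.
Qed.

Lemma iii_V : (forall n : nat, (0 < n)%N -> exists fn : C -> C,
        (forall z, X z -> f z = cf_nest a b n z (fn z)) /\
        asym_equiv X fn (fun z => (a n.+1)%:C / z)) -> forall n, V n.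
Proof.
move=> H.
suff H1 : forall k, LVn k.+1.
  case=> [|k]; last exact: (lim_bnd (H1 k)).
  exact: (lim_bnd (step_LV Ha (lim_bnd (H1 0%N)))).
move=> k; have [fn [hf he]] := H k.+1 (ltn0Sn k).
have lu : lim X (fun z => fn z * z ^+ 1) (a k.+2)%:C.
  by apply/(eqv_pow _ _ _ (a_neq0 Ha k.+1)).
have lu0 : lim X fn 0.
  have l := lim_mul lu (lim_invz X); rewrite mulr0 in l; apply: (lim_ext _ l).
  by apply: evW (ev_nz X) => z z0; rewrite expr1 mulrK.
have mb : ev X (fun z => forall u, nr u <= 1 -> Q k.+2 z - u * Q k.+1 z != 0 /\
   cf_nest a b k.+1 z u = (P k.+2 z - u * P k.+1 z) / (Q k.+2 z - u * Q k.+1 z)).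
  by have [r h] := MB b Ha k.+1; exists r => z _ hz u hu; exact: h.
have hx : ev X (fun z => f z = cf_nest a b k.+1 z (fn z)) by exists 0 => z Xz _; exact: hf.
have hs : ev X (fun z => nr (fn z) <= 1) by apply: evW (lu0 1 ltr01) => z; rewrite subr0.
have e : ev X (fun z => (fn z * z ^+ 1) * (Ar k.+1)%:C *
    ((Q k.+2 z / z ^+ k.+1) * (Q k.+2 z / z ^+ k.+1 - (fn z * z ^+ 1) * (Q k.+1 z / z ^+ k) * z^-1 ^+ 2))^-1
    = (f z - w k.+1 z) * z ^+ (2 * k.+1).+1).
  apply: evW (ev2 (ev2 mb hx) (ev2 hs (ev2 (ev_sub X (Wev b Ha k.+1)) (ev_nz X))))
     => z [[mbz hxz] [hsz [[qz ew] z0]]].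
  have [nzq ec] := mbz (fn z) hsz.
  rewrite hxz ec ew -(detz a b k.+1 z).
  have -> : z ^+ (2 * k.+1).+1 = z * (z * (z * (z ^+ k * z ^+ k))).
    by rewrite -exprD -!exprS; congr (_ ^+ _); lia.
  have zk0 : z ^+ k != 0 by rewrite expf_neq0.
  rewrite (exprS z k) expr1 expr2.
  move: nzq qz zk0; move: (fn z) (Q k.+2 z) (Q k.+1 z) (P k.+2 z) (P k.+1 z) (z ^+ k) => u q2 q1 p2 p1 zk nzq qz zk0.
  by field; side.
apply: (lim_ext e).
have L2 := lim_subf (Qlim a b X k.+1) (lim_mul (lim_mul lu (Qlim a b X k)) (lim_z0 X 1)).
rewrite mulr0 subr0 in L2.
have L3 := lim_mul (Qlim a b X k.+1) L2; rewrite mulr1 in L3.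
have L4 := lim_inv L3 (oner_neq0 _); rewrite invr1 in L4.
have L5 := lim_mul (lim_mul lu (lim_cst X (Ar k.+1)%:C)) L4; rewrite mulr1 in L5.
by rewrite (ArS a k.+1) rmorphM mulrC.
Qed.

Lemma poly_lb (Y : set C) (p : {poly C}) : p != 0 ->
  exists2 c : R, 0 < c & ev Y (fun z => c <= nr p.[z]).
Proof.
move=> p0; set dp := (size p).-1.
have hs : (size p <= dp.+1)%N by rewrite /dp leqSpred.
have lp := poly_lim Y hs.
have lc : p`_dp != 0 by rewrite -lead_coefE lead_coef_eq0.
exists (nr p`_dp / 2); first by rewrite divr_gt0 // nr_gt0.
apply: evW (ev2 (lim_ne0 lp lc) (ev_big Y 1)) => z [h1 h2].
have z0 : z != 0 by rewrite -nr_eq0 gt_eqF // (lt_trans ltr01 h2).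
have -> : p.[z] = p.[z] / z ^+ dp * z ^+ dp by rewrite divfK // expf_neq0.
rewrite nrM nrX; apply: le_trans h1 _; apply: ler_peMr; first exact: nr_ge0.
by apply: exprn_ege1; apply: ltW.
Qed.

Lemma poly_ev_nz (Y : set C) (p : {poly C}) : p != 0 -> ev Y (fun z => p.[z] != 0).
Proof.
move=> p0; have [c c0 h] := poly_lb Y p0; apply: evW h => z hz.
by rewrite -nr_eq0 gt_eqF // (lt_le_trans c0 hz).
Qed.

Lemma uniq_r : unbounded X -> forall n, V n -> forall (g h : {poly C}) (r : C -> C),
  h != 0 -> (size g <= n.+1)%N -> (size h <= n.+1)%N ->
  (exists rr : R, forall z, rr%:C < `|z| -> r z = g.[z] / h.[z]) ->
  bigO_at_oo X (fun z => f z - r z) (fun z => (z ^+ (2 * n).+1)^-1) ->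
  eq_near_oo r (w n).
Proof.
move=> Xu n hV g h r h0 sg sh [rr hr] hO.
have hrev : ev setT (fun z => r z = g.[z] / h.[z]).
  by exists rr => z _ hz; apply: hr; apply/ltP'.
have hnz := poly_ev_nz setT h0.
have Vr := (proj1 (bO_pow _ _ _) hO).
set N := g * qq a b n.+1 - pp a b n.+1 * h.
have hN z : N.[z] = g.[z] * Q n.+1 z - P n.+1 z * h.[z] by rewrite /N !hornerE.
have N0 : N = 0.
  case: (eqVneq N 0) => // Nn0; exfalso.
  have [c c0 hc] := poly_lb setT Nn0.
  have lN : lim X (fun z => N.[z]) 0.
    have e : ev X (fun z => ((f z - w n z) * z ^+ (2 * n).+1 - (f z - r z) * z ^+ (2 * n).+1)
        * (h.[z] / z ^+ n) * (Q n.+1 z / z ^+ n) * z^-1 = N.[z]).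
      apply: evW (ev2 (ev2 (ev_sub X hrev) (ev_sub X hnz)) (ev2 (ev_sub X (Wev b Ha n)) (ev_nz X)))
        => z [[er hz] [[qz ew] z0]].
      rewrite hN er ew.
      have -> : z ^+ (2 * n).+1 = z * (z ^+ n * z ^+ n) by rewrite exprS mul2n -addnn exprD.
      have zk0 : z ^+ n != 0 by rewrite expf_neq0.
      move: hz qz zk0; move: (h.[z]) (g.[z]) (Q n.+1 z) (P n.+1 z) (f z) (z ^+ n) => hz' gz q p fz zk hz qz zk0.
      by field; side.
    apply: (lim_ext e); apply: bnd_lim0 (lim_invz X).
    apply: bnd_mul; last exact: lim_bnd (Qlim a b X n).
    apply: bnd_mul; last exact: lim_bnd (poly_lim X sh).
    exact: bnd_subf.
  have c2 : 0 < c / 2 by rewrite divr_gt0.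
  have [r0 H0] := ev2 (ev_sub X hc) (lN _ c2).
  have [z Xz hz] := Xu r0.
  have [H1 H2] := H0 z Xz (proj1 (ltP' _ _) hz); rewrite subr0 in H2.
  lra.
have [r0 H0] := ev2 (ev2 hrev hnz) (Wev b Ha n).
exists r0 => z hz; have [[er hz'] [qz ew]] := H0 z I (proj1 (ltP' _ _) hz).
rewrite er ew; apply/eqP; rewrite eqr_div //; apply/eqP.
by apply/eqP; rewrite -subr_eq0 -hN N0 horner0.
Qed.

Lemma w_ratfun n : is_ratfun_of (w n) (pp a b n.+1) (qq a b n.+1).
Proof.
split; first by case: (qq_size a b n) => m _ _; exact: monic_neq0.
have [rr H0] := Wev b Ha n; exists rr => z hz.
exact: (H0 z I (proj1 (ltP' _ _) hz)).2.
Qed.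

Lemma V_vii : unbounded X -> (forall n, V n) -> forall n : nat,
        [/\ ratfun_deg_le n (w n),
            bigO_at_oo X (fun z => f z - w n z)
              (fun z => (z ^+ (2 * n).+1)^-1)
          & forall r : C -> C, ratfun_deg_le n r ->
              bigO_at_oo X (fun z => f z - r z)
                (fun z => (z ^+ (2 * n).+1)^-1) ->
              eq_near_oo r (w n)].
Proof.
move=> Xu H n; split.
- exists (pp a b n.+1), (qq a b n.+1); split; first exact: w_ratfun.
  split.
    apply/Bezout_coprimepP.
    exists ((((Ar n)%:C)^-1)%:P * qq a b n, - ((((Ar n)%:C)^-1)%:P * pp a b n)) => /=.
    have e : (((Ar n)%:C)^-1)%:P * qq a b n * pp a b n.+1 + - ((((Ar n)%:C)^-1)%:P * pp a b n) * qq a b n.+1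
       = (((Ar n)%:C)^-1)%:P * (pp a b n.+1 * qq a b n - pp a b n * qq a b n.+1).
      by move: (((Ar n)%:C)^-1)%:P (qq a b n) (pp a b n.+1) (pp a b n) (qq a b n.+1) => c q0 p1 p0 q1; ring.
    by rewrite e det -polyCM mulVf ?(ArC_neq0 Ha) // eqpxx.
  split; first exact: leq_trans (proj1 (pp_size a b n)) (leqnSn n).
  by case: (qq_size a b n) => _ -> _.
- by apply/(bO_pow X (fun z => f z - w n z)); exact: H.
- move=> r [g [h [[h0 hr] [_ [sg sh]]]]] hO.
  exact: (uniq_r Xu (H n) h0 sg sh hr hO).
Qed.

Lemma V_viii : unbounded X -> (forall n, V n) -> forall n : nat, (0 < n)%N ->
        pade_approx X f n (w n) /\
        forall r : C -> C, pade_approx X f n r -> eq_near_oo r (w n).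
Proof.
move=> Xu H n n0; split.
  split; last by apply/(bO_pow X (fun z => f z - w n z)); exact: H.
  exists (pp a b n.+1), (qq a b n.+1); split; first exact: w_ratfun.
  split; first exact: (proj1 (pp_size a b n)).
  by case: (qq_size a b n) => _ -> _.
move=> r [[g [h [[h0 hr] [sg sh]]]] hO].
exact: (uniq_r Xu (H n) h0 (leq_trans sg (leqnSn n)) sh hr hO).
Qed.

Lemma viii_V : (forall n : nat, (0 < n)%N ->
        pade_approx X f n (w n) /\
        forall r : C -> C, pade_approx X f n r -> eq_near_oo r (w n)) -> forall n, V n.
Proof.
move=> H.
suff H1 : forall k, V k.+1.
  by case=> [|k]; [exact: (lim_bnd (step_LV Ha (H1 0%N))) | exact: H1].
move=> k; have [[_ hO] _] := H k.+1 (ltn0Sn k); exact/bO_pow.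
Qed.

End Chain2.

Import numFieldTopology.Exports numFieldNormedType.Exports.


Section St.
Variable R : realType.
Local Notation C := R[i].
Variable mu : {measure set R -> \bar R}.
Hypothesis Hmom : forall k, mu.-integrable setT (fun t : R => (t ^+ k)%:E).
Local Notation RI f := (Rintegral mu setT f).
Local Notation int f := (mu.-integrable setT (EFin \o f)).

Lemma int_mom k : int (fun t : R => t ^+ k).
Proof. exact: Hmom. Qed.

Lemma intZ k (f : R -> R) : int f -> int (fun t => k * f t).
Proof.
move=> H; have := (integrableZl measurableT k H); apply: (eq_integrable measurableT) => t _ /=.
by rewrite EFinM.
Qed.

Lemma intD (f g : R -> R) : int f -> int g -> int (fun t => f t + g t).
Proof.
move=> H1 H2; have := (integrableD measurableT H1 H2); apply: (eq_integrable measurableT) => t _ /=.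
by rewrite EFinD.
Qed.

Lemma intB (f g : R -> R) : int f -> int g -> int (fun t => f t - g t).
Proof.
move=> H1 H2; have := (integrableB measurableT H1 H2); apply: (eq_integrable measurableT) => t _ /=.
by rewrite EFinB.
Qed.

Lemma intA (f : R -> R) : int f -> int (fun t => `|f t|).
Proof.
move=> H; have := (integrable_abse H); apply: (eq_integrable measurableT) => t _ /=.
by [].
Qed.

Lemma int0 : int (fun _ : R => 0).
Proof.
by have := (intZ 0 (int_mom 0)); apply: (eq_integrable measurableT) => t _ /=; rewrite mul0r.
Qed.

Lemma int_le (f g : R -> R) : measurable_fun setT f -> int g ->
  (forall t, `|f t| <= g t) -> int f.
Proof.
move=> mf ig hfg; apply: (le_integrable measurableT _ _ ig).
  by apply/measurable_realfun.measurable_EFinP.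
move=> t _ /=; rewrite ?abse_EFin lee_fin.
by rewrite (ger0_norm (le_trans (normr_ge0 _) (hfg t))).
Qed.

Lemma RI_abs_le (f : R -> R) : int f -> `|RI f| <= RI (fun t => `|f t|).
Proof. by move=> H; apply: le_normr_Rintegral. Qed.

Definition CI (h : R -> C) : C :=
  Complex (RI (fun t => complex.Re (h t))) (RI (fun t => complex.Im (h t))).
Definition Cint (h : R -> C) := int (fun t => complex.Re (h t)) /\ int (fun t => complex.Im (h t)).

Lemma CI_add (h1 h2 : R -> C) : Cint h1 -> Cint h2 ->
  CI (fun t => h1 t + h2 t) = CI h1 + CI h2.
Proof.
move=> [r1 i1] [r2 i2]; rewrite /CI.
have -> : (fun t => complex.Re (h1 t + h2 t)) = (fun t => complex.Re (h1 t) + complex.Re (h2 t)).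
  by apply: funext => t; case: (h1 t) (h2 t) => ? ? [] ? ? /=.
have -> : (fun t => complex.Im (h1 t + h2 t)) = (fun t => complex.Im (h1 t) + complex.Im (h2 t)).
  by apply: funext => t; case: (h1 t) (h2 t) => ? ? [] ? ? /=.
by rewrite !RintegralD.
Qed.

Lemma Cint_add (h1 h2 : R -> C) : Cint h1 -> Cint h2 -> Cint (fun t => h1 t + h2 t).
Proof.
move=> [r1 i1] [r2 i2]; split.
  by have := (intD r1 r2); apply: (eq_integrable measurableT) => t _ /=; case: (h1 t) (h2 t) => ? ? [] ? ? /=.
by have := (intD i1 i2); apply: (eq_integrable measurableT) => t _ /=; case: (h1 t) (h2 t) => ? ? [] ? ? /=.
Qed.

Lemma CI_scal (c : C) (h : R -> C) : Cint h -> CI (fun t => c * h t) = c * CI h.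
Proof.
move=> [r1 i1]; rewrite /CI; case: c => cr ci.
have -> : (fun t => complex.Re ((cr +i* ci) * h t)) =
    (fun t => cr * complex.Re (h t) - ci * complex.Im (h t)).
  by apply: funext => t; case: (h t).
have -> : (fun t => complex.Im ((cr +i* ci) * h t)) =
    (fun t => cr * complex.Im (h t) + ci * complex.Re (h t)).
  by apply: funext => t; case: (h t).
rewrite RintegralB ?RintegralD ?RintegralZl //; try exact: intZ.
Qed.

Lemma Cint_scal (c : C) (h : R -> C) : Cint h -> Cint (fun t => c * h t).
Proof.
move=> [r1 i1]; case: c => cr ci; split.
  by have := (intB (intZ cr r1) (intZ ci i1)); apply: (eq_integrable measurableT) => t _ /=; case: (h t).
by have := (intD (intZ cr i1) (intZ ci r1)); apply: (eq_integrable measurableT) => t _ /=; case: (h t).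
Qed.

Lemma CI_real (g : R -> R) : CI (fun t => (g t)%:C) = (RI g)%:C.
Proof.
rewrite /CI /=; congr Complex.
by rewrite Rintegral_cst // mul0r.
Qed.

Lemma Cint_real (g : R -> R) : int g -> Cint (fun t => (g t)%:C).
Proof. by move=> H; split => //; exact: int0. Qed.

Lemma nr_ReIm (w : C) : nr w <= `|complex.Re w| + `|complex.Im w|.
Proof.
have ni : nr ('i : C) = 1.
  by rewrite /nr normc_def /= expr0n /= add0r expr1n sqrtr1.
rewrite {1}[w]complexE; apply: le_trans (nrD _ _) _.
by rewrite nrM !nrC ni mul1r.
Qed.

Lemma CI_bound (h : R -> C) : Cint h ->
  nr (CI h) <= RI (fun t => `|complex.Re (h t)|) + RI (fun t => `|complex.Im (h t)|).
Proof.
move=> [r1 i1]; apply: le_trans (nr_ReIm _) _.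
by apply: lerD; apply: RI_abs_le.
Qed.


Definition hj (z : C) (j : nat) (t : R) : C := (t%:C) ^+ j / (z - t%:C).

Lemma ReH x y j t : complex.Re (hj (x +i* y) j t) =
  t ^+ j * ((x - t) / ((x - t) * (x - t) + y * y)).
Proof. by rewrite /hj -rmorphXn /= subr0 mul0r subr0 !expr2. Qed.

Lemma ImH x y j t : complex.Im (hj (x +i* y) j t) =
  t ^+ j * ((- y) / ((x - t) * (x - t) + y * y)).
Proof. by rewrite /hj -rmorphXn /= subr0 mul0r addr0 !expr2 mulNr. Qed.

Lemma cont_form (x y : R) (g : R -> R) (j : nat) : y != 0 -> continuous g ->
  continuous (fun t : R => t ^+ j * (g t / ((x - t) * (x - t) + y * y))).
Proof.
move=> y0 cg t.
have den0 : (x - t) * (x - t) + y * y != 0.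
  have h1 : 0 < y * y by rewrite -expr2 exprn_even_gt0.
  have h2 : 0 <= (x - t) * (x - t) by rewrite -expr2 sqr_ge0.
  by rewrite gt_eqF //; lra.
have cxt : (fun u : R => x - u) @ t --> x - t by apply: cvgB; [exact: cvg_cst | exact: cvg_id].
apply: cvgM; first exact: exprn_continuous.
apply: cvgM; first exact: cg.
apply: cvgV => //; apply: cvgD; last exact: cvg_cst.
exact: cvgM.
Qed.

Lemma nr_ge_Im (w : C) : `|complex.Im w| <= nr w.
Proof.
rewrite /nr normc_def /= -sqrtr_sqr; apply: ler_wsqrtr.
by rewrite lerDr sqr_ge0.
Qed.

Lemma nr_ge_Re (w : C) : `|complex.Re w| <= nr w.
Proof.
rewrite /nr normc_def /= -sqrtr_sqr; apply: ler_wsqrtr.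
by rewrite lerDl sqr_ge0.
Qed.

Lemma nr_hj z j t : nr (hj z j t) = `|t| ^+ j / nr (z - t%:C).
Proof. by rewrite /hj nrM nrV nrX nrC. Qed.

Lemma Im_zt (z : C) t : complex.Im (z - t%:C) = complex.Im z.
Proof. by case: z => x y /=; rewrite subr0. Qed.

Lemma hj_le z j t : complex.Im z != 0 -> nr (hj z j t) <= `|t| ^+ j * `|complex.Im z|^-1.
Proof.
move=> y0; rewrite nr_hj; apply: ler_wpM2l; first by rewrite exprn_ge0.
have hy : 0 < `|complex.Im z| by rewrite normr_gt0.
have hb : `|complex.Im z| <= nr (z - t%:C) by rewrite -(Im_zt z t) nr_ge_Im.
by rewrite lef_pV2 ?posrE // (lt_le_trans hy hb).
Qed.

Lemma int_abs k : int (fun t : R => `|t| ^+ k).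
Proof.
have := intA (int_mom k); apply: (eq_integrable measurableT) => t _ /=.
by rewrite normrX.
Qed.

Lemma Cint_hj z j : complex.Im z != 0 -> Cint (hj z j).
Proof.
move=> y0; have hb := hj_le j ^~ y0.
have ig := intZ (`|complex.Im z|^-1) (int_abs j).
have ig' : int (fun t => `|t| ^+ j * `|complex.Im z|^-1).
  by have := ig; apply: (eq_integrable measurableT) => t _ /=; rewrite mulrC.
clear ig; move: y0 hb ig'; case: z => x y /= y0 hb ig'; split.
- apply: (int_le _ ig').
    have -> : (fun t => complex.Re (hj (x +i* y) j t)) =
      (fun t => t ^+ j * ((x - t) / ((x - t) * (x - t) + y * y))).
      by apply: funext => t; rewrite ReH.
    apply: measurable_realfun.continuous_measurable_fun; apply: cont_form => //.
    by move=> t; apply: cvgB; [exact: cvg_cst | exact: cvg_id].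
  by move=> t; apply: le_trans (nr_ge_Re _) (hb t).
- apply: (int_le _ ig').
    have -> : (fun t => complex.Im (hj (x +i* y) j t)) =
      (fun t => t ^+ j * ((- y) / ((x - t) * (x - t) + y * y))).
      by apply: funext => t; rewrite ImH.
    apply: measurable_realfun.continuous_measurable_fun; apply: cont_form => //.
    by move=> t; exact: cvg_cst.
  by move=> t; apply: le_trans (nr_ge_Im _) (hb t).
Qed.

Lemma zt_nz (z : C) t : complex.Im z != 0 -> z - t%:C != 0.
Proof.
move=> y0; apply: contraNneq y0 => h.
by rewrite -(Im_zt z t) h.
Qed.

Lemma hj_step z j : z != 0 -> complex.Im z != 0 ->
  hj z j = fun t => z^-1 * ((t ^+ j)%:C) + z^-1 * hj z j.+1 t.
Proof.
move=> z0 y0; apply: funext => t.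
have zt := zt_nz t y0.
rewrite /hj exprS rmorphXn /=; move: zt; move: (t%:C) ((t%:C) ^+ j) => tc v zt.
by field; side.
Qed.

Lemma CI_step z j : z != 0 -> complex.Im z != 0 ->
  CI (hj z j) = z^-1 * (RI (fun t => t ^+ j))%:C + z^-1 * CI (hj z j.+1).
Proof.
move=> z0 y0; rewrite (hj_step j z0 y0) CI_add.
- by rewrite !CI_scal ?CI_real //; [exact: Cint_hj | exact: Cint_real (int_mom j)].
- exact: Cint_scal (Cint_real (int_mom j)).
- exact: Cint_scal (Cint_hj _ y0).
Qed.

Lemma CI_exp z : z != 0 -> complex.Im z != 0 -> forall j,
  CI (hj z 0) = S (moment mu) j z + CI (hj z j) / z ^+ j.
Proof.
move=> z0 y0; elim=> [|j ih]; first by rewrite /S big_geq // add0r expr0 divr1.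
rewrite ih SS (CI_step j z0 y0).
have zj : z ^+ j != 0 by rewrite expf_neq0.
rewrite (exprS z j); move: zj; move: (S (moment mu) j z) (z ^+ j) (CI (hj z j.+1)) => s zk c zj.
rewrite /moment /Rintegral /=.
by field; side.
Qed.

Lemma stieltjes_CI z : stieltjes mu z = CI (hj z 0).
Proof.
have -> : hj z 0 = fun t => (z - t%:C)^-1 by apply: funext => t; rewrite /hj expr0 mul1r.
by [].
Qed.

Lemma CI_hj_bound z j : complex.Im z != 0 ->
  nr (CI (hj z j)) <= 2 * (RI (fun t => `|t| ^+ j) * `|complex.Im z|^-1).
Proof.
move=> y0; have [cr ci] := Cint_hj j y0.
have ig : int (fun t => `|t| ^+ j * `|complex.Im z|^-1).
  by have := intZ (`|complex.Im z|^-1) (int_abs j); apply: (eq_integrable measurableT) => t _ /=; rewrite mulrC.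
apply: le_trans (CI_bound (Cint_hj j y0)) _.
rewrite -RintegralZr //; last exact: int_abs.
rewrite mulr2n mulrDl mul1r; apply: lerD; apply: le_Rintegral => //; try exact: intA.
  by move=> t _; apply: le_trans (nr_ge_Re _) (hj_le j t y0).
by move=> t _; apply: le_trans (nr_ge_Im _) (hj_le j t y0).
Qed.

End St.


Section Sector.
Variable R : realType.
Local Notation C := R[i].

Lemma sin_mono (x y : R) : 0 <= x -> x <= y -> y <= pi / 2 -> sin x <= sin y.
Proof.
move=> x0 xy ypi.
have pi0 : 0 < pi :> R by exact: pi_gt0.
case: (eqVneq x y) => [-> //|nxy].
have lxy : x < y by rewrite lt_neqAle nxy xy.
apply: ltW; rewrite ltr_sin // in_itv /=; apply/andP; split; lra.
Qed.

Lemma sin_lb (de ep u : R) : 0 < de -> 0 < ep -> de <= u -> u <= pi - ep ->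
  sin de * sin ep <= sin u.
Proof.
move=> d0 e0 du up.
have pi0 : 0 < pi :> R by exact: pi_gt0.
have sd1 := sin_le1 de; have se1 := sin_le1 ep.
have sd0 : 0 <= sin de by apply: sin_ge0_pi; apply/andP; split; lra.
have se0 : 0 <= sin ep by apply: sin_ge0_pi; apply/andP; split; lra.
case: (lerP u (pi / 2)) => hu.
  have := sin_mono (ltW d0) du hu; nra.
have -> : sin u = sin (pi - u) by rewrite sinB sinpi cospi mul0r sub0r mulN1r opprK.
have h1 : ep <= pi - u by lra.
have h2 : pi - u <= pi / 2 by lra.
have := sin_mono (ltW e0) h1 h2; nra.
Qed.

Lemma sector_Im (de ep : R) (z : C) : 0 < de -> 0 < ep -> sector de ep z ->
  0 < sin de * sin ep /\ sin de * sin ep * nr z <= `|complex.Im z|.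
Proof.
move=> d0 e0 [z0 [th [/andP [th1 th2] hz /andP [hd he]]]].
have pi0 : 0 < pi :> R by exact: pi_gt0.
have na := normr_ge0 th.
have hIm : complex.Im z = nr z * sin th.
  by rewrite {1}hz nrE /= mul0r addr0.
have sabs : `|sin th| = sin `|th|.
  case: (boolP (0 <= th)) => t0.
    rewrite (ger0_norm t0) ger0_norm //; apply: sin_ge0_pi; apply/andP; split; lra.
  move: t0; rewrite -ltNge => t0.
  rewrite (ltr0_norm t0) ltr0_norm; last first.
    have : 0 < sin (- th) by apply: sin_gt0_pi; apply/andP; split; lra.
    by rewrite sinN oppr_gt0.
  by rewrite sinN.
have sd : 0 < sin de by apply: sin_gt0_pi; apply/andP; split; lra.
have se : 0 < sin ep by apply: sin_gt0_pi; apply/andP; split; lra.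
split; first exact: mulr_gt0.
rewrite hIm normrM (ger0_norm (nr_ge0 z)) sabs mulrC.
apply: ler_wpM2l; first exact: nr_ge0.
exact: sin_lb.
Qed.

Lemma lim_dom (X : set C) (u : C -> C) (K : R) :
  ev X (fun z => nr (u z) <= K / nr z) -> lim X u 0.
Proof.
move=> h.
have b : bnd X (fun z => u z * z).
  exists K; apply: evW (ev2 h (ev_nz X)) => z [hz z0].
  by rewrite nrM -(ler_pdivlMr _ _ (nr_gt0 z0)).
have l := bnd_lim0 b (lim_invz X).
apply: (lim_ext _ l); apply: evW (ev_nz X) => z z0.
by rewrite mulrK.
Qed.

End Sector.


Lemma stieltjes_AE (R : realType) (mu : {measure set R -> \bar R})
  (Hmom : forall k : nat, mu.-integrable setT (fun t : R => (t ^+ k)%:E))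
  (de ep : R) : 0 < de -> 0 < ep ->
  asym_expansion (sector de ep) (stieltjes mu) (fun k => (moment mu k)%:C).
Proof.
move=> d0 e0 n; apply/lo_pow.
set c := sin de * sin ep.
set M := Rintegral mu setT (fun t => `|t| ^+ n.+1).
have M0 : 0 <= M by apply: Rintegral_ge0 => t _; rewrite exprn_ge0.
apply: (@lim_dom _ _ _ (2 * (M * c^-1))).
exists 0 => z hz zpos.
have [c0 hc] := sector_Im d0 e0 hz.
have z0 : z != 0 by rewrite -nr_eq0 gt_eqF.
have hy : 0 < `|complex.Im z| by apply: lt_le_trans hc; rewrite mulr_gt0.
have y0 : complex.Im z != 0 by rewrite -normr_gt0.
rewrite stieltjes_CI (CI_exp Hmom z0 y0 n.+1).
have zn : z ^+ n.+1 != 0 by rewrite expf_neq0.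
have -> : (S (moment mu) n.+1 z + CI mu (hj z n.+1) / z ^+ n.+1 -
     \sum_(0 <= k < n.+1) (moment mu k)%:C / z ^+ k.+1) * z ^+ n.+1 = CI mu (hj z n.+1).
  rewrite [S _ _ _ + _]addrC addrK; exact: divfK.
apply: le_trans (CI_hj_bound Hmom n.+1 y0) _.
rewrite -mulrA; apply: ler_wpM2l => //.
rewrite -mulrA; apply: ler_wpM2l => //.
rewrite -invfM lef_pV2 ?posrE //; last by rewrite mulr_gt0 // nr_gt0.
Qed.

Unset Implicit Arguments.

Theorem theorem4p6 (R : realType) (mu : {measure set R -> \bar R})
  (a b : nat -> R)
  (Hsupp : infinite_set (msupport mu))
  (Hmom : forall k : nat, mu.-integrable setT (fun t : R => (t ^+ k)%:E))
  (Ha : forall n : nat, (0 < n)%N -> 0 < a n)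
  (Hw : forall n : nat, (0 < n)%N ->
     littleo_at_oo setT
       (fun z : R[i] => cf_approx a b n z
          - \sum_(0 <= k < (2 * n)%N) (moment mu k)%:C / z ^+ k.+1)
       (fun z : R[i] => (z ^+ (2 * n))^-1)) :
  (forall (X : set R[i]) (f : R[i] -> R[i]), unbounded X ->
   [<->
     (* (i) *)
     asym_expansion X f (fun k => (moment mu k)%:C);
     (* (ii) *)
     cf_asymp X f (cf_approx a b);
     (* (iii) *)
     (forall n : nat, (0 < n)%N -> exists fn : R[i] -> R[i],
        (forall z, X z -> f z = cf_nest a b n z (fn z)) /\
        asym_equiv X fn (fun z => (a n.+1)%:C / z));
     (* (iv) *)
     (forall n : nat,
        asym_equiv X (fun z => f z - cf_approx a b n z)
          (fun z => (\prod_(1 <= i < n.+2) a i)%:C / z ^+ (2 * n).+1));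
     (* (v) *)
     (forall n : nat,
        bigO_at_oo X (fun z => f z - cf_approx a b n z)
          (fun z => (z ^+ (2 * n).+1)^-1));
     (* (vi) *)
     (forall N : nat, exists2 n : nat, (N <= n)%N &
        bigO_at_oo X (fun z => f z - cf_approx a b n z)
          (fun z => (z ^+ (2 * n).+1)^-1));
     (* (vii) *)
     (forall n : nat,
        [/\ ratfun_deg_le n (cf_approx a b n),
            bigO_at_oo X (fun z => f z - cf_approx a b n z)
              (fun z => (z ^+ (2 * n).+1)^-1)
          & forall r : R[i] -> R[i], ratfun_deg_le n r ->
              bigO_at_oo X (fun z => f z - r z)
                (fun z => (z ^+ (2 * n).+1)^-1) ->
              eq_near_oo r (cf_approx a b n)]);
     (* (viii) *)
     (forall n : nat, (0 < n)%N ->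
        pade_approx X f n (cf_approx a b n) /\
        forall r : R[i] -> R[i], pade_approx X f n r ->
          eq_near_oo r (cf_approx a b n))
   ]) /\
  (forall delta eps : R, 0 < delta -> 0 < eps ->
     cf_asymp (sector delta eps) (stieltjes mu) (cf_approx a b)).
Proof.
have Hw' : forall n : nat, (0 < n)%N ->
  littleo_at_oo setT (fun z => cf_approx a b n z - S (moment mu) (2 * n) z)
    (fun z => (z ^+ (2 * n))^-1) by exact: Hw.
split.
  move=> X f Xu.
  have Vv : (forall n, bigO_at_oo X (fun z => f z - cf_approx a b n z)
          (fun z => (z ^+ (2 * n).+1)^-1)) <-> (forall n, Vn a b X f n).
    by split=> H n; [exact/bO_pow | apply/bO_pow; exact: H].
  tfae.
  - move=> H; apply: (V_ii Ha); exact: (AE_V Ha Hw' H).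
  - move=> H; apply: (LV_iii Ha); apply: (V_LV Ha); exact: (ii_V Ha H).
  - move=> H n; apply/(eqv_pow _ _ _ (ArC_neq0 Ha n.+1)).
    exact: (V_LV Ha (iii_V Ha H) n).
  - move=> H; apply/Vv => n.
    exact: (lim_bnd (proj1 (eqv_pow _ _ _ (ArC_neq0 Ha n.+1)) (H n))).
  - by move=> H N; exists N.
  - move=> H; apply: (V_vii Ha Xu); exact: (vi_V Ha H).
  - move=> H; apply: (V_viii Ha Xu) => n.
    by case: (H n) => _ hO _; apply/bO_pow.
  - move=> H; apply: (V_AE Ha Hw'); exact: (viii_V Ha H).
move=> de ep d0 e0.
apply: (V_ii Ha); apply: (AE_V Ha Hw').
exact: stieltjes_AE.
Qed.
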